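(* Let $f:E\to E'$ be an FD-homomorphism between two Feller-Dynkin processes with state spaces $E$ and $E'$. Let $R$ be the equivalence relation on $E\uplus E'$ given by \[ R=\{(x,y)\in E\times E : f(x)=f(y)\}\cup\{(x,y),(y,x) : x\in E,\ y\in E',\ f(x)=y\}\cup\{(y,y'):y,y'\in E',\ y=y'\}. \] Then $R$ is a bisimulation between the two Feller-Dynkin processes.
   Context: A Feller-Dynkin (FD) process consists of: a locally compact Hausdorff space $E$ with countable base and Borel $\sigma$-algebra; its one-point compactification $E_\partial=E\uplus\{\partial\}$; a strongly continuous semigroup $(\hat P_t)_{t\ge0}$ on $C_0(E)$ with $0\le f\le1\Rightarrow0\le\hat P_tf\le1$, with associated sub-Markov kernels $P_t$ ($\hat P_tf(x)=\int f(y)P_t(x,dy)$); the set $\Omega$ of trajectories (cadlag $\omega:[0,\infty)\to E_\partial$ such that $\omega(t-)=\partial$ or $\omega(t)=\partial$ implies $\omega(u)=\partial$ for all $u\ge t$) with $\mathcal{G}=\sigma(\omega\mapsto\omega(s): s\ge0)$; the probability measures $\mathbb{P}^x$ on $(\Omega,\mathcal{G})$, $x\in E_\partial$, uniquely determined by $\mathbb{P}^x(\omega(0)\in dx_0,\omega(t_1)\in dx_1,\dots,\omega(t_n)\in dx_n)=\delta_x(dx_0)P^{+\partial}_{t_1}(x_0,dx_1)\cdots P^{+\partial}_{t_n-t_{n-1}}(x_{n-1},dx_n)$, where $P^{+\partial}_t(x,\{\partial\})=1-P_t(x,E)$, $P^{+\partial}_t(\partial,\{\partial\})=1$; and a map $obs:E\to2^{AP}$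 ($AP$ finite set of atomic propositions), with $obs(\partial)=\partial$. Given FD processes $(E,\Omega,\mathcal{G},\mathbb{P}^x,obs)$ and $(E',\Omega',\mathcal{G}',\mathbb{P}'^{x},obs')$, an FD-homomorphism is a continuous map $f:E\to E'$ (extended by $f(\partial)=\partial$) such that $obs=obs'\circ f$ and for all $x\in E$ and all $B'\in\mathcal{G}'$, $\mathbb{P}'^{f(x)}(B')=\mathbb{P}^x(\{\omega\in\Omega: f\circ\omega\in B'\})$. Given two FD processes with data indexed by $1,2$ (state spaces $E_1,E_2$, trajectory spaces $\Omega_1,\Omega_2$, $\sigma$-algebras $\mathcal{G}_1,\mathcal{G}_2$, measures $\mathbb{P}^x_1,\mathbb{P}^x_2$, maps $obs_1,obs_2$), a bisimulation between them is an equivalence relation $R$ on $E_1\uplus E_2$ such that whenever $x\,R\,y$ with $x\in E_i$, $y\in E_j$: (i) $obs_i(x)=obs_j(y)$; (ii) for all $B_1\in\mathcal{G}_1$, $B_2\in\mathcal{G}_2$ satisfying ''for all $k,l\in\{1,2\}$, all $\omega_k\in B_k$ and all $\omega_l\in\Omega_l$, if $\omega_k(t)\,R\,\omega_l(t)$ for all $t\ge0$ ($\partial$ related to itself) then $\omega_l\in B_l$'', we have $\mathbb{P}^x_i(B_i)=\mathbb{P}^y_j(B_j)$. *)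

(* Defs.v *)
From HB Require Import structures.
From mathcomp Require Import all_boot all_order all_algebra.
From mathcomp Require Import all_classical all_reals all_analysis.
From mathcomp Require Import Rstruct Rstruct_topology.

Set Implicit Arguments.
Unset Strict Implicit.
Unset Printing Implicit Defensive.

Import Order.TTheory GRing.Theory Num.Theory.
Import numFieldNormedType.Exports.

Local Open Scope classical_set_scope.
Local Open Scope ring_scope.

Notation R := Rdefinitions.R.

(* one-point compactification E_partial = option E; the point [None] is the
   cemetery point \partial *)
Notation opc E := (one_point_compactification E).

Section FD.
Variable E : topologicalType.

Definition borelE : set (set E) := <<s @open E >>.
Definition borelP : set (set (opc E)) := <<s @open (opc E) >>.

Definition MP := g_sigma_algebraType (@open (opc E)).

Definition subprob_measure (mu : set E -> \bar R) : Prop :=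
  [/\ mu set0 = 0%E,
      (forall A, borelE A -> (0 <= mu A)%E),
      (forall F : (set E)^nat, (forall i, borelE (F i)) -> trivIset setT F ->
          (\sum_(0 <= i <oo) mu (F i))%E = mu (\bigcup_i F i))
    & (mu setT <= 1)%E].

Definition prob_measure_on {T : Type} (D : set T) (M : set (set T))
    (mu : set T -> \bar R) : Prop :=
  [/\ mu set0 = 0%E,
      (forall A, M A -> (0 <= mu A)%E),
      (forall F : (set T)^nat, (forall i, M (F i)) -> trivIset setT F ->
          (\sum_(0 <= i <oo) mu (F i))%E = mu (\bigcup_i F i))
    & mu D = 1%E].

Definition C0 (f : E -> R) : Prop :=
  continuous f /\
  forall eps : R, 0 < eps ->
    exists K : set E, compact K /\ forall x, ~ K x -> `|f x| < eps.

Definition ext0 (f : E -> R) (z : MP) : \bar R :=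
  match z with Some y => (f y)%:E | None => 0%E end.

Definition push (mu : set E -> \bar R) : set MP -> \bar R :=
  fun B => mu (Some @^-1` B).

Definition Pplus (P : R -> E -> set E -> \bar R) (t : R) (x : opc E)
    : set MP -> \bar R :=
  fun B => match x with
           | Some x' => (P t x' (Some @^-1` B) +
                          (1 - P t x' setT) * (\1_B None)%:E)%E
           | None => (\1_B None)%:E
           end.

(* iterated integral giving the finite dimensional distributions:
   l = [:: (d_1, A_1); ...; (d_n, A_n)] lists the time increments
   d_i = t_i - t_{i-1} and the sets A_i *)
Fixpoint fdd (P : R -> E -> set E -> \bar R) (l : seq (R * set (opc E)))
    (x : MP) : \bar R :=
  match l with
  | [::] => 1%E
  | (d, A) :: l' => (\int[Pplus P d x]_(z in (A : set MP)) fdd P l' z)%E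
  end.

Fixpoint fdd_event (l : seq (R * set (opc E))) (s : R) (w : R -> opc E) : Prop :=
  match l with
  | [::] => True
  | (d, A) :: l' => A (w (s + d)) /\ fdd_event l' (s + d) w
  end.

(* trajectories: cadlag paths [0,oo) -> E_partial, absorbed at \partial.
   A path is represented as a function R -> E_partial which is extended to
   negative times by its value at time 0 (convention). *)
Definition is_traj (w : R -> opc E) : Prop :=
  [/\ (forall t : R, t < 0 -> w t = w 0),
      (forall t : R, 0 <= t -> w @ t^'+ --> w t),
      (forall t : R, 0 < t -> cvg (w @ t^'-))
    & (forall t : R, 0 <= t ->
        (lim (w @ t^'-) = None \/ w t = None) ->
        forall u, t <= u -> w u = None)].

Definition Omega : set (R -> opc E) := is_traj.

Definition Gsig : set (set (R -> opc E)) :=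
  <<s Omega, (fun B => exists s (A : set (opc E)),
      [/\ 0 <= s, borelP A & B = Omega `&` ((fun w => w s) @^-1` A)]) >>.

End FD.

Record FDProcess (E : topologicalType) (AP : finType) := {
  fd_hausdorff : hausdorff_space E;
  fd_loc_compact : locally_compact [set: E];
  fd_second_countable : @second_countable E;
  Phat : R -> (E -> R) -> (E -> R);
  Pk : R -> E -> set E -> \bar R;
  Px : opc E -> set (R -> opc E) -> \bar R;
  obs : E -> {set AP};
  Phat_C0 : forall (t : R) f, 0 <= t -> C0 f -> C0 (Phat t f);
  Phat_linear : forall (t : R) (a : R) f g, 0 <= t -> C0 f -> C0 g ->
      Phat t (fun x => a * f x + g x) = (fun x => a * Phat t f x + Phat t g x);
  Phat_0 : forall f, C0 f -> Phat 0 f = f;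
  Phat_semigroup : forall (s t : R) f, 0 <= s -> 0 <= t -> C0 f ->
      Phat (s + t) f = Phat s (Phat t f);
  Phat_strong_cont : forall f, C0 f -> forall eps : R, 0 < eps ->
      exists2 d : R, 0 < d &
        forall t : R, 0 < t < d -> forall x, `|Phat t f x - f x| < eps;
  Phat_sub_markov : forall (t : R) f, 0 <= t -> C0 f -> (forall x, 0 <= f x <= 1) ->
      forall x, 0 <= Phat t f x <= 1;
  Pk_measure : forall (t : R) x, 0 <= t -> subprob_measure (Pk t x);
  Pk_measurable : forall (t : R) A, 0 <= t -> borelE A ->
      forall c : R, borelE [set x | (Pk t x A < c%:E)%E];
  Phat_Pk : forall (t : R) f x, 0 <= t -> C0 f ->
      (Phat t f x)%:E = (\int[push (Pk t x)]_(z in [set: MP E]) ext0 f z)%E;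
  Px_prob : forall x, prob_measure_on (@Omega E) (@Gsig E) (Px x);
  Px_fdd : forall x (A0 : set (opc E)) (l : seq (R * set (opc E))),
      borelP A0 -> all (fun p => `[< 0 < p.1 /\ borelP p.2 >]) l ->
      Px x [set w | @Omega E w /\ A0 (w 0) /\ fdd_event l 0 w] =
        ((\1_A0 x)%:E * fdd (Pk) l (x : MP E))%E
}.

Definition lift_path (E E' : topologicalType) (f : E -> E')
    (w : R -> opc E) : R -> opc E' := fun t => omap f (w t).

Definition FD_hom (E E' : topologicalType) (AP : finType)
    (X : FDProcess E AP) (X' : FDProcess E' AP) (f : E -> E') : Prop :=
  [/\ continuous f,
      (forall x, obs X x = obs X' (f x))
    & forall x (B' : set (R -> opc E')), @Gsig E' B' ->
        Px X' (Some (f x)) B' = Px X (Some x) [set w | @Omega E w /\ B' (lift_path f w)]].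

Definition rel_pt (E1 E2 Ek El : Type) (Rl : E1 + E2 -> E1 + E2 -> Prop)
    (ik : Ek -> E1 + E2) (il : El -> E1 + E2) (a : option Ek) (b : option El)
    : Prop :=
  match a, b with
  | None, None => True
  | Some a', Some b' => Rl (ik a') (il b')
  | _, _ => False
  end.

Definition rel_path (E1 E2 Ek El : Type) (Rl : E1 + E2 -> E1 + E2 -> Prop)
    (ik : Ek -> E1 + E2) (il : El -> E1 + E2)
    (wk : R -> option Ek) (wl : R -> option El) : Prop :=
  forall t : R, 0 <= t -> rel_pt Rl ik il (wk t) (wl t).

Definition equivalence_rel {T : Type} (Rl : T -> T -> Prop) : Prop :=
  [/\ forall x, Rl x x, (forall x y, Rl x y -> Rl y x)
    & forall x y z, Rl x y -> Rl y z -> Rl x z].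

Definition bisimulation (E1 E2 : topologicalType) (AP : finType)
    (X1 : FDProcess E1 AP) (X2 : FDProcess E2 AP)
    (Rl : E1 + E2 -> E1 + E2 -> Prop) : Prop :=
  let sobs (z : E1 + E2) := match z with inl x => obs X1 x | inr y => obs X2 y end in
  let sprob (z : E1 + E2) B1 B2 :=
    match z with inl x => Px X1 (Some x) B1 | inr y => Px X2 (Some y) B2 end in
  let i1 := @inl E1 E2 in let i2 := @inr E1 E2 in
  equivalence_rel Rl /\
  forall z z', Rl z z' ->
    sobs z = sobs z' /\
    forall (B1 : set (R -> opc E1)) (B2 : set (R -> opc E2)),
      @Gsig E1 B1 -> @Gsig E2 B2 ->
      (forall w w', B1 w -> @Omega E1 w' -> rel_path Rl i1 i1 w w' -> B1 w') ->
      (forall w w', B1 w -> @Omega E2 w' -> rel_path Rl i1 i2 w w' -> B2 w') ->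
      (forall w w', B2 w -> @Omega E1 w' -> rel_path Rl i2 i1 w w' -> B1 w') ->
      (forall w w', B2 w -> @Omega E2 w' -> rel_path Rl i2 i2 w w' -> B2 w') ->
      sprob z B1 B2 = sprob z' B1 B2.

Definition hom_rel (E E' : Type) (f : E -> E') (z z' : E + E') : Prop :=
  match z, z' with
  | inl x, inl x' => f x = f x'
  | inl x, inr y => f x = y
  | inr y, inl x => f x = y
  | inr y, inr y' => y = y'
  end.

(* Main.v *)
Require Import Defs.
From mathcomp Require Import all_boot all_classical all_reals all_analysis.

From HB Require Import structures.
From mathcomp Require Import all_boot all_order all_algebra.
From mathcomp Require Import all_classical all_reals all_analysis.
From mathcomp Require Import Rstruct Rstruct_topology.
From mathcomp.algebra_tactics Require Import ring lra.

Set Implicit Arguments.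
Unset Strict Implicit.
Unset Printing Implicit Defensive.
Import Order.TTheory GRing.Theory Num.Theory.
Import numFieldNormedType.Exports.
Local Open Scope classical_set_scope.
Local Open Scope ring_scope.


Section GsigFacts.
Variable E : topologicalType.

Lemma Gsig_sub (B : set (R -> opc E)) : Gsig B -> B `<=` @Omega E.
Proof.
move=> GB; apply: (@smallest_sub _ (sigma_algebra (@Omega E)) _ [set B | B `<=` @Omega E] _ _ B GB).
- split.
  + by move=> w.
  + by move=> A _ w [].
  + by move=> A AO w [n _]; exact: AO.
- move=> A /= [s [A0 [_ _ ->]]]; by move=> w [].
Qed.

Lemma Gsig_sa : sigma_algebra (@Omega E) (@Gsig E).
Proof. exact: smallest_sigma_algebra. Qed.

Lemma Gsig_Omega : Gsig (@Omega E).
Proof. by rewrite -(setD0 (@Omega E)); apply: sigma_algebraCD; exact: sigma_algebra0. Qed.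

Lemma Gsig_D (B : set (R -> opc E)) : Gsig B -> Gsig (@Omega E `\` B).
Proof. exact: sigma_algebraCD. Qed.

Lemma Gsig_I (A B : set (R -> opc E)) : Gsig A -> Gsig B -> Gsig (A `&` B).
Proof.
by have [_ _ _ HI] := (sigma_algebraP (@Gsig_sub)).1 Gsig_sa; exact: HI.
Qed.

Lemma Gsig_bigcup (A : (set (R -> opc E))^nat) : (forall n, Gsig (A n)) -> Gsig (\bigcup_n A n).
Proof. exact: sigma_algebra_bigcup. Qed.

Lemma Gsig_bigcap (A : (set (R -> opc E))^nat) : (forall n, Gsig (A n)) -> Gsig (\bigcap_n A n).
Proof.
move=> GA.
have -> : \bigcap_n A n = @Omega E `\` \bigcup_n (@Omega E `\` A n).
  apply/seteqP; split => w.
  - move=> Aw; split; first exact: (Gsig_sub (GA 0%N)) (Aw 0%N I).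
    by move=> [n _ [_]]; apply; exact: Aw.
  - move=> [Ow nU] n _; apply: contrapT => nA; apply: nU; exists n => //.
by apply: Gsig_D; apply: Gsig_bigcup => n; exact: Gsig_D.
Qed.

Lemma Gsig0 : Gsig (@set0 (R -> opc E)).
Proof. exact: sigma_algebra0. Qed.

Lemma Gsig_gen (s : R) (A : set (opc E)) : 0 <= s -> borelP A ->
  Gsig (@Omega E `&` (fun w => w s) @^-1` A).
Proof. by move=> s0 bA; apply: sub_sigma_algebra; exists s, A. Qed.

Lemma borelP_open (A : set (opc E)) : open A -> borelP A.
Proof. by move=> oA; apply: sub_sigma_algebra. Qed.

Lemma borelP_None : borelP [set None : opc E].
Proof.
have -> : [set None : opc E] = setT `\` (Some @` setT).
  apply/seteqP; split => z.
  - by move=> /= ->; split => // -[x _].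
  - case: z => [z|] //= [_]; case; by exists z.
apply: sigma_algebraCD; apply: borelP_open.
exact: one_point_compactification_open_some openT.
Qed.

End GsigFacts.

Section MeasFacts.
Variables (T : Type) (D : set T) (M : set (set T)) (mu : set T -> \bar R).
Hypothesis hmu : prob_measure_on D M mu.
Hypothesis M0 : M set0.

Lemma prob_add2 (A B : set T) : M A -> M B -> A `&` B = set0 ->
  mu (A `|` B) = (mu A + mu B)%E.
Proof.
move=> MA MB AB0; have [mu0 mupos muadd _] := hmu.
pose F := fun i : nat => if i == 0%N then A else if i == 1%N then B else set0.
have MF i : M (F i) by rewrite /F; case: ifP => // _; case: ifP.
have tF : trivIset setT F.
  move=> i j _ _ [x [Fi Fj]]; move: Fi Fj; rewrite /F.
  case: i => [|[|i]] /=; case: j => [|[|j]] //=.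
  - by move=> Ax Bx; have : (A `&` B) x by []; rewrite AB0.
  - by move=> Bx Ax; have : (A `&` B) x by []; rewrite AB0.
have <- : \bigcup_i F i = A `|` B.
  apply/seteqP; split => x.
  - by move=> [[|[|i]] _ /=]; rewrite /F /=; [left|right|].
  - by case => ?; [exists 0%N | exists 1%N].
rewrite -muadd //.
rewrite (@nneseries_split _ _ 0 2); last by move=> k _; exact: mupos.
rewrite add0n eseries0; last by move=> [|[|i]] //.
by rewrite adde0 big_nat_recr //= big_nat_recr //= big_nil add0e.
Qed.

End MeasFacts.

Section OPC.
Variable T : topologicalType.
Hypothesis hT : hausdorff_space T.
Hypothesis lcT : locally_compact [set: T].
Hypothesis scT : @second_countable T.

Lemma nbhs_SomeE (x : T) (W : set (opc T)) :
  nbhs (Some x : opc T) W = nbhs x (Some @^-1` W).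
Proof. by []. Qed.

Lemma base_enum : exists e : nat -> set T, (forall n, open (e n)) /\
  (forall x U, nbhs x U -> exists n, e n x /\ e n `<=` U).
Proof.
case: scT => B cB [Bo Bb]; case/countable_injP: cB => g ginj.
pose e n := match pselect (exists b, B b /\ g b = n) with
  | left h => projT1 (cid h) | right _ => set0 end.
exists e; split.
- move=> n; rewrite /e; case: pselect => [h|_]; last exact: open0.
  by case: (cid h) => b [Bb' _] /=; exact: Bo.
- move=> x U xU; have [V [BV Vx] VU] := Bb x U xU.
  exists (g V); rewrite /e; case: pselect => [h|]; last by case; exists V.
  case: (cid h) => b [Bb' gb] /=.
  have -> : b = V by apply: ginj; rewrite ?in_setE.
  by [].
Qed.

Lemma opc_hausdorff : hausdorff_space (opc T).
Proof. exact: one_point_compactification_hausdorff. Qed.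

Lemma opc_reg (x : opc T) (U : set (opc T)) : nbhs x U ->
  exists2 W, nbhs x W & closure W `<=` U.
Proof.
move=> xU.
have := @compact_regular _ x setT opc_hausdorff (@one_point_compactification_compact T) filterT.
move=> /(_ (nbhs_filter x)) /(_ U xU) [W xW WU]; by exists W.
Qed.

Lemma opc_open_Some (U : set T) : open U -> open (Some @` U : set (opc T)).
Proof. exact: one_point_compactification_open_some. Qed.

End OPC.
Lemma right_ex (t : R) (P : R -> Prop) : (\forall u \near t^'+, P u) ->
  exists2 d : R, 0 < d & forall u, t < u < t + d -> P u.
Proof.
rewrite near_withinE => /nbhs_ballP [d d0 hd]; exists d => // u /andP[tu ud].
apply: hd => //; rewrite /ball /= distrC ger0_norm; lra.
Qed.

Lemma left_ex (t : R) (P : R -> Prop) : (\forall u \near t^'-, P u) ->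
  exists2 d : R, 0 < d & forall u, t - d < u < t -> P u.
Proof.
rewrite near_withinE => /nbhs_ballP [d d0 hd]; exists d => // u /andP[tu ud].
apply: hd => //; rewrite /ball /= ger0_norm; lra.
Qed.

Lemma left_in (t d : R) : 0 < d -> \forall u \near t^'-, t - d < u < t.
Proof.
move=> d0; rewrite near_withinE; apply/nbhs_ballP; exists d => // u /= tu ut.
move: tu; rewrite /ball /= ger0_norm ?subr_ge0 ?ltW // => *; apply/andP; split; lra.
Qed.

Lemma right_in (t d : R) : 0 < d -> \forall u \near t^'+, t < u < t + d.
Proof.
move=> d0; rewrite near_withinE; apply/nbhs_ballP; exists d => // u /= tu ut.
move: tu; rewrite /ball /= distrC ger0_norm ?subr_ge0 ?ltW // => *; apply/andP; split; lra.
Qed.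

#[global] Instance alpf (t : R) : ProperFilter t^'- := at_left_proper_filter t.
#[global] Instance arpf (t : R) : ProperFilter t^'+ := at_right_proper_filter t.

Section Paths.
Variables (E E' : topologicalType) (f : E -> E').
Hypothesis fc : continuous f.
Hypothesis hE' : hausdorff_space E'.
Hypothesis lcE' : locally_compact [set: E'].

Local Notation L := (lift_path f).

Lemma omap_cvg {U : Type} {F : set_system U} (g : U -> opc E) (a : E) :
  g @ F --> (Some a : opc E) -> (fun u => omap f (g u)) @ F --> (Some (f a) : opc E').
Proof.
move=> ga W fW.
have : nbhs (Some a : opc E) (omap f @^-1` W).
  rewrite nbhs_SomeE; exact: (fc fW).
by move/ga.
Qed.

Lemma Omega_abs (w : R -> opc E) (t u : R) : Omega w -> 0 <= t -> w t = None -> t <= u -> w u = None.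
Proof. by move=> [_ _ _ h4] t0 wt tu; apply: (h4 t t0 _ u tu); right. Qed.

Lemma L_rc (w : R -> opc E) (t : R) : Omega w -> 0 <= t -> L w @ t^'+ --> L w t.
Proof.
move=> Ow t0; have [_ h2 _ _] := Ow.
rewrite /lift_path; case wt: (w t) => [a|] /=.
  by apply: omap_cvg; rewrite -wt; exact: h2.
apply: cvg_near_cst; near=> u.
by rewrite (Omega_abs Ow t0 wt) //; apply/ltW; near: u; exact: nbhs_right_gt.
Unshelve. all: by end_near. Qed.

Lemma L_traj (w : R -> opc E) : Omega w ->
  (forall t : R, 0 < t -> cvg (L w @ t^'-)) -> Omega (L w).
Proof.
move=> Ow hc; have [h1 h2 h3 h4] := Ow; split.
- by move=> t t0; rewrite /lift_path h1.
- by move=> t t0; exact: L_rc.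
- exact: hc.
- move=> t t0 [hl|hw]; last first.
    move=> u tu; rewrite /lift_path (Omega_abs Ow t0 _ tu) //.
    by move: hw; rewrite /lift_path; case: (w t).
  have [tz|tpos] := eqVneq t 0.
  + subst t.
    have : lim (L w @ 0^'-) = L w 0.
      apply: (cvg_lim (opc_hausdorff hE' lcE')); apply: cvg_near_cst.
      near=> u; rewrite /lift_path h1 //; near: u; exact: nbhs_left_lt.
    rewrite hl => /esym hw u tu; rewrite /lift_path (Omega_abs Ow t0 _ tu) //.
    by move: hw; rewrite /lift_path; case: (w 0).
  + have tp : 0 < t by rewrite lt_def tpos t0.
    have wl := h3 t tp.
    destruct (lim (w @ t^'-) : option E) as [a|] eqn:wlt.
    * have c1 : L w @ t^'- --> (Some (f a) : opc E').
        apply: omap_cvg; exact wl.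
      have : lim (L w @ t^'-) = Some (f a) by apply: (cvg_lim (opc_hausdorff hE' lcE')); exact c1.
      by rewrite hl.
    * by move=> u tu; rewrite /lift_path (h4 t t0 (or_introl wlt) u tu).
Unshelve. all: by end_near. Qed.

End Paths.

Lemma exists_inv_lt (d : R) : 0 < d -> exists k : nat, k.+1%:R^-1 < d.
Proof.
move=> d0; have [N _ hN] := near_infty_natSinv_lt (PosNum d0).
by exists N; apply: hN => /=.
Qed.

Section Tau.
Variable E : topologicalType.

Lemma tau_props (w : R -> opc E) r : Omega w -> 0 <= r -> w r = None ->
  exists tau : R, [/\ 0 <= tau, w tau = None &
     forall t, 0 <= t -> t < tau -> w t <> None].
Proof.
move=> Ow r0 wr; have [_ h2 _ _] := Ow.
set S := [set t : R | 0 <= t /\ w t = None].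
have hS : has_inf S.
  split; first by exists r.
  by exists 0 => x [x0 _].
have lb := ge_inf hS.2.
have tau0 : 0 <= inf S.
  rewrite leNgt; apply/negP => h.
  have [s [s0 _] hs] := @inf_adherent _ S (- inf S) (ltac:(lra)) hS.
  lra.
exists (inf S); split => //.
- have hc := h2 _ tau0.
  destruct (w (inf S) : option E) as [a|] eqn:wt; last by [].
  have hn : \forall u \near (inf S)^'+, (Some @` setT : set (opc E)) (w u).
    apply: (hc (Some @` setT)); apply: open_nbhs_nbhs; split; first exact: opc_open_Some openT.
    by exists a.
  have [d d0 hd] := right_ex hn.
  have [s [s0 ws] hs] := @inf_adherent _ S d d0 hS.
  have := lb s (conj s0 ws); rewrite le_eqVlt => /orP[/eqP es|lts].
    by rewrite -es wt in ws.
  have [x _ wx] := hd s (ltac:(apply/andP; split; lra)).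
  by rewrite ws in wx.
- move=> t t0 tlt wt; have := lb t (conj t0 wt); lra.
Qed.
End Tau.

Section Bad.
Variables (E E' : topologicalType) (f : E -> E').
Hypothesis fc : continuous f.
Hypothesis hE' : hausdorff_space E'.
Hypothesis lcE' : locally_compact [set: E'].
Variable e : nat -> set E'.
Hypothesis e_open : forall n, open (e n).
Hypothesis e_base : forall (x : E') (U : set E'), nbhs x U -> exists n, e n x /\ e n `<=` U.

Local Notation L := (lift_path f).

Definition A1 (m : nat) : set (opc E') := Some @` e m.
Definition A2 (n : nat) : set (opc E') := ~` closure (Some @` e n : set (opc E')).
Definition good m n := closure (A1 m) `<=` (Some @` e n : set (opc E')).
Definition DA (A : set (opc E')) : set (opc E) := Some @` (f @^-1` (Some @^-1` A)).
Definition RF (w : R -> opc E) (A : set (opc E')) := forall k : nat, exists q : rat,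
  [/\ 0 <= (ratr q : R), DA A (w (ratr q)) & w (ratr q + k.+1%:R^-1) = None].
Definition bad (w : R -> opc E) := exists m n, [/\ good m n, RF w (A1 m) & RF w (A2 n)].

Lemma DA_L A (w : R -> opc E) t : DA A (w t) -> A (L w t) /\ w t <> None.
Proof. by rewrite /lift_path => -[a Aa <-]. Qed.

Lemma closure_disj m n p : good m n -> closure (A1 m) p -> closure (A2 n) p -> False.
Proof.
move=> gmn c1 c2; have /gmn h1 := c1.
have : closure (A2 n) `<=` ~` (Some @` e n : set (opc E')).
  have -> : ~` (Some @` e n : set (opc E')) = closure (~` (Some @` e n : set (opc E'))).
    by apply/closure_id; apply: open_closedC; exact: opc_open_Some.
  apply: closureS; rewrite /A2 => z nz ez; apply: nz; exact: subset_closure.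
by move=> /(_ p c2).
Qed.

Lemma freq_closure (w : R -> opc E) (tau : R) A (l : opc E') :
  L w @ tau^'- --> l ->
  (forall k : nat, exists r : R, tau - k.+1%:R^-1 <= r < tau /\ A (L w r)) ->
  closure A l.
Proof.
move=> hl hA B lB; have := hl B lB => /left_ex [d d0 hd].
have [k hk] := exists_inv_lt d0.
have [r [/andP[r1 r2] Ar]] := hA k.
exists (L w r); split => //; apply: hd; apply/andP; split => //.
apply: lt_le_trans r1; by rewrite ltrD2l ltrN2.
Qed.

Lemma RF_tau (w : R -> opc E) tau A : Omega w -> 0 <= tau -> w tau = None ->
  (forall t, 0 <= t -> t < tau -> w t <> None) -> RF w A ->
  forall k : nat, exists r : R, [/\ 0 <= r, tau - k.+1%:R^-1 <= r < tau & A (L w r)].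
Proof.
move=> Ow tau0 wtau hlt hR k; have [q [q0 Dq Nq]] := hR k.
have [Aq wq] := DA_L Dq.
exists (ratr q); split => //; apply/andP; split.
- rewrite lerBlDr; rewrite leNgt; apply/negP => h.
  apply: (hlt _ _ h Nq).
  apply: addr_ge0 => //; rewrite invr_ge0; exact: ler0n.
- rewrite ltNge; apply/negP => h; apply: wq.
  exact: (Omega_abs Ow tau0 wtau h).
Qed.

Lemma bad_notL (w : R -> opc E) : Omega w -> bad w -> ~ Omega (L w).
Proof.
move=> Ow [m [n [gmn R1 R2]]] OL.
have [q0 [q00 D0 N0]] := R1 0%N.
have hq1 : 0 <= ratr q0 + (1:R)^-1 by rewrite invr1; apply: addr_ge0.
have [tau [tau0 wtau hlt]] := @tau_props _ w _ Ow hq1 N0.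
have [r0 [r00 /andP[_ r0t] _]] := RF_tau Ow tau0 wtau hlt R1 0%N.
have taup : 0 < tau by lra.
have [_ _ h3 _] := OL.
have hc := h3 tau taup.
have F1 : forall A, RF w A -> closure A (lim (L w @ tau^'-)).
  move=> A hA; apply: (freq_closure hc) => k.
  by have [r [_ h1 h2]] := RF_tau Ow tau0 wtau hlt hA k; exists r.
exact: (closure_disj gmn (F1 _ R1) (F1 _ R2)).
Qed.

Lemma sep_base (P : E') (Q : opc E') : Q <> Some P ->
  exists m n, [/\ good m n, e m P & nbhs Q (A2 n)].
Proof.
move=> QP; have H := opc_hausdorff hE' lcE'.
have nc : ~ cluster (nbhs (Some P : opc E')) Q by move=> c; apply: QP; exact/esym/(H _ _ c).
have [U [V [PU QV UV]]] : exists U V, [/\ nbhs (Some P : opc E') U, nbhs Q V &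
    forall x, U x -> V x -> False].
  apply: contrapT => hn; apply: nc => U V PU QV.
  apply: contrapT => hne; apply: hn; exists U, V; split => // x Ux Vx.
  by apply: hne; exists x.
have [n [en enU]] := e_base (PU : nbhs P (Some @^-1` U)).
have A2Q : nbhs Q (A2 n).
  apply: open_nbhs_nbhs; split; first exact/closed_openC/closed_closure.
  move=> cl; have [z [[y ey <-] Vz]] := cl V QV.
  exact: (UV (Some y) (enU _ ey) Vz).
have nS : nbhs (Some P : opc E') (Some @` e n).
  by apply: open_nbhs_nbhs; split; [exact: opc_open_Some|exists P].
have [W PW clW] := opc_reg hE' lcE' nS.
have [m [em emW]] := e_base (PW : nbhs P (Some @^-1` W)).
exists m, n; split => //.
apply: subset_trans clW; apply: closureS => z [y ey <-]; exact: emW.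
Qed.

Lemma two_clusters (F : set_system (opc E')) : ProperFilter F -> ~ cvg F ->
  exists l1 l2, [/\ l1 <> l2, cluster F l1 & cluster F l2].
Proof.
move=> FF ncF.
have [l1 [_ c1]] := @one_point_compactification_compact E' F FF filterT.
have [B l1B nFB] : exists2 B, nbhs l1 B & ~ F B.
  apply: contrapT => hn; apply: ncF; apply: (@cvgP _ _ l1) => B l1B.
  by apply: contrapT => nFB; apply: hn; exists B.
pose F2 := filter_from F (fun C => C `&` ~` B).
have FF2 : ProperFilter F2.
  apply: filter_from_proper.
    apply: filter_from_filter; first by exists setT; exact: filterT.
    move=> i j Fi Fj; exists (i `&` j); first exact: filterI.
    by move=> x [[ix jx] nBx]; split; split.
  move=> C FC; apply: contrapT => hn; apply: nFB; apply: filterS FC => x Cx.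
  by apply: contrapT => nBx; apply: hn; exists x.
have [l2 [_ c2]] := @one_point_compactification_compact E' F2 FF2 filterT.
exists l1, l2; split => //.
- move=> e12; subst l2.
  have [x [[_ nBx] Bx]] := c2 (setT `&` ~` B) B (ltac:(exists setT; [exact: filterT| by []])) l1B.
  exact: nBx.
- move=> A C FA l2C; have [x [[Ax _] Cx]] := c2 (A `&` ~` B) C (ltac:(by exists A)) l2C.
  by exists x.
Qed.

Lemma cluster_RF (w : R -> opc E) (t : R) (l : opc E') (A : set (opc E')) :
  Omega w -> 0 < t -> (forall u, u < t -> w u <> None) ->
  (forall u, t <= u -> w u = None) ->
  cluster (L w @ t^'-) l -> open A -> A l -> RF w A.
Proof.
move=> Ow t0 hlt hge cl oA Al k.
set d := Order.min t (k.+1%:R^-1 : R).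
have d0 : 0 < d by rewrite lt_min t0 invr_gt0 ltr0n.
have dt : d <= t by rewrite ge_min lexx.
have dk : d <= k.+1%:R^-1 by rewrite ge_min lexx orbT.
pose X := [set z | exists2 u, t - d < u < t & z = L w u].
have FX : (L w @ t^'-) X.
  by apply: filterS (left_in t d0) => u hu; exists u.
have [z [[u /andP[u1 u2] ->] Au]] := cl X A FX (open_nbhs_nbhs (conj oA Al)).
have u0 : 0 <= u by lra.
have hA : \forall v \near u^'+, A (L w v).
  by apply: (L_rc fc Ow u0); apply: open_nbhs_nbhs.
have [eps eps0 heps] := right_ex hA.
have [q] := @rat_in_itvoo _ u (Order.min (u + eps) t) (ltac:(rewrite lt_min u2 andbT; lra)).
rewrite in_itv /= lt_min => /andP[uq /andP[q1 q2]].
exists q; split.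
- lra.
- have wq := hlt _ q2.
  have Aq : A (L w (ratr q)) by apply: heps; apply/andP; split.
  move: Aq wq; rewrite /lift_path.
  destruct (w (ratr q) : option E) as [c|] eqn:wc => // Aq _.
  by exists c.
- apply: hge; have h : t <= ratr q + d by lra.
  apply: (le_trans h); rewrite lerD2l; exact: dk.
Qed.

Lemma notL_bad (w : R -> opc E) : Omega w -> ~ Omega (L w) -> bad w.
Proof.
move=> Ow nOL; have [h1 h2 h3 h4] := Ow.
have [t [t0 nc]] : exists t : R, 0 < t /\ ~ cvg (L w @ t^'-).
  apply: contrapT => hn; apply: nOL; apply: (L_traj fc hE' lcE' Ow) => t t0.
  by apply: contrapT => nc; apply: hn; exists t.
have hlt : forall u, u < t -> w u <> None.
  move=> u ut wu.
  have [u0 [u00 u0t wu0]] : exists u0, [/\ 0 <= u0, u0 < t & w u0 = None].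
    have [u0'|u0'] := leP 0 u; first by exists u.
    by exists 0; split => //; rewrite -(h1 u u0').
  apply: nc; apply: (@cvgP _ _ (None : opc E')); apply: cvg_near_cst.
  have tu0 : 0 < t - u0 by lra.
  apply: filterS (left_in t tu0) => v /andP[v1 v2].
  by rewrite /lift_path (Omega_abs Ow u00 wu0) //; lra.
have hge : forall u, t <= u -> w u = None.
  have wl := h3 t t0.
  destruct (lim (w @ t^'-) : option E) as [a|] eqn:wlt.
  - exfalso; apply: nc; apply: (@cvgP _ _ (Some (f a) : opc E')).
    apply: omap_cvg => //; exact wl.
  - exact: (h4 t (ltW t0) (or_introl wlt)).
have [l1 [l2 [l12 c1 c2]]] := two_clusters (fmap_proper_filter (L w) (at_left_proper_filter t)) nc.
have key : forall (P : E') (Q : opc E'), Q <> Some P -> cluster (L w @ t^'-) (Some P) ->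
    cluster (L w @ t^'-) Q -> bad w.
  move=> P Q QP cP cQ; have [m [n [gmn emP QA2]]] := sep_base QP.
  exists m, n; split => //.
  - apply: (cluster_RF Ow t0 hlt hge cP); first exact: opc_open_Some.
    by exists P.
  - apply: (cluster_RF Ow t0 hlt hge cQ); first exact/closed_openC/closed_closure.
    exact: nbhs_singleton.
destruct (l1 : option E') as [P1|] eqn:el1.
- by apply: (key P1 l2) => // e2; apply: l12; rewrite e2.
- destruct (l2 : option E') as [P2|] eqn:el2; first by apply: (key P2 None).
  by [].
Qed.

End Bad.

Section Meas.
Variable E : topologicalType.

Lemma Gsig_if (P : Prop) (S : set (R -> opc E)) : (P -> Gsig S) -> Gsig [set w | P /\ S w].
Proof.
move=> GS; have [p|np] := pselect P.
  have -> : [set w | P /\ S w] = S by apply/seteqP; split => w // [].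
  exact: GS.
have -> : [set w | P /\ S w] = set0 by apply/seteqP; split => w // [].
exact: Gsig0.
Qed.

Lemma Gsig_ex (I : countType) (S : I -> set (R -> opc E)) :
  (forall i, Gsig (S i)) -> Gsig [set w | exists i, S i w].
Proof.
move=> GS.
have -> : [set w | exists i, S i w] =
    \bigcup_n (match unpickle n with Some i => S i | None => set0 end).
  apply/seteqP; split => w.
  - by move=> [i Si]; exists (pickle i) => //; rewrite pickleK.
  - move=> [n _]; case: (unpickle n) => // i Si; by exists i.
apply: Gsig_bigcup => n; case: (unpickle n) => //; exact: Gsig0.
Qed.

Lemma Gsig_all (S : nat -> set (R -> opc E)) :
  (forall k, Gsig (S k)) -> Gsig [set w | forall k, S k w].
Proof.
move=> GS; have -> : [set w | forall k, S k w] = \bigcap_k S k.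
  by apply/seteqP; split => w h k //; exact: h.
exact: Gsig_bigcap.
Qed.

End Meas.

Section BadMeas.
Variables (E E' : topologicalType) (f : E -> E').
Hypothesis fc : continuous f.
Hypothesis hE' : hausdorff_space E'.
Hypothesis lcE' : locally_compact [set: E'].
Variable e : nat -> set E'.
Hypothesis e_open : forall n, open (e n).
Hypothesis e_base : forall (x : E') (U : set E'), nbhs x U -> exists n, e n x /\ e n `<=` U.

Local Notation L := (lift_path f).

Lemma DA_open (A : set (opc E')) : open A -> open (DA f A).
Proof.
move=> oA; apply: opc_open_Some; apply: open_comp; first by move=> x _; exact: fc.
apply: (@open_comp E' (opc E') Some A) => //; move=> x _; exact: one_point_compactification_some_continuous.
Qed.

Definition Ev (A : set (opc E')) (k : nat) (q : rat) : set (R -> opc E) :=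
  [set w | 0 <= (ratr q : R) /\
    ((@Omega E `&` (fun w => w (ratr q)) @^-1` DA f A) `&`
     (@Omega E `&` (fun w => w (ratr q + k.+1%:R^-1)) @^-1` [set None])) w].

Lemma Gsig_Ev A k q : open A -> Gsig (Ev A k q).
Proof.
move=> oA; rewrite /Ev; apply: Gsig_if => q0; apply: Gsig_I.
- by apply: Gsig_gen => //; apply: borelP_open; exact: DA_open.
- apply: Gsig_gen; last exact: borelP_None.
  by apply: addr_ge0 => //; rewrite invr_ge0; exact: ler0n.
Qed.

Definition RFset (A : set (opc E')) : set (R -> opc E) :=
  [set w | forall k, exists q, Ev A k q w].

Lemma Gsig_RFset A : open A -> Gsig (RFset A).
Proof. by move=> oA; apply: Gsig_all => k; apply: Gsig_ex => q; exact: Gsig_Ev. Qed.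

Lemma RFsetE A w : Omega w -> RFset A w <-> RF f w A.
Proof.
move=> Ow; split.
- by move=> h k; have [q [q0 [[_ D] [_ N]]]] := h k; exists q.
- by move=> h k; have [q [q0 D N]] := h k; exists q.
Qed.

Definition badset : set (R -> opc E) :=
  [set w | exists m, exists n, good e m n /\ (RFset (A1 e m) `&` RFset (A2 e n)) w].

Lemma Gsig_badset : Gsig badset.
Proof.
apply: Gsig_ex => m; apply: Gsig_ex => n; apply: Gsig_if => _; apply: Gsig_I.
- apply: Gsig_RFset; exact: opc_open_Some.
- apply: Gsig_RFset; exact/closed_openC/closed_closure.
Qed.

Lemma badset_sub : badset `<=` @Omega E.
Proof. by move=> w [m [n [_ [h _]]]]; have [q [_ [[Ow _] _]]] := h 0%N. Qed.

Lemma G0E : [set w | @Omega E w /\ @Omega E' (L w)] = @Omega E `\` badset.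
Proof.
apply/seteqP; split => w.
- move=> [Ow OL]; split => // -[m [n [gmn [r1 r2]]]].
  apply: (bad_notL e_open Ow _ OL); exists m, n; split => //; exact/(RFsetE _ Ow).
- move=> [Ow nb]; split => //; apply: contrapT => nOL.
  have [m [n [gmn r1 r2]]] := notL_bad fc hE' lcE' e_open e_base Ow nOL.
  apply: nb; exists m, n; split => //; split; exact/(RFsetE _ Ow).
Qed.

Lemma Gsig_G0 : Gsig [set w | @Omega E w /\ @Omega E' (L w)].
Proof. by rewrite G0E; apply: Gsig_D; exact: Gsig_badset. Qed.

End BadMeas.

Lemma one_plus_eq (a : \bar R) : (0 <= a)%E -> (1 + a = 1)%E -> a = 0%E.
Proof.
case: a => [r| |] //= r0.
- by move=> [] h; congr (_%:E); lra.
Qed.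

Section Core.
Variables (E E' : topologicalType) (AP : finType).
Variables (X : FDProcess E AP) (X' : FDProcess E' AP) (f : E -> E').
Hypothesis hom : FD_hom X X' f.

Local Notation L := (lift_path f).

Lemma core_hom (x : E) (B1 : set (R -> opc E)) (B2 : set (R -> opc E')) :
  Gsig B1 -> Gsig B2 ->
  (forall w w', B1 w -> @Omega E' w' -> rel_path (hom_rel f) inl inr w w' -> B2 w') ->
  (forall w w', B2 w -> @Omega E w' -> rel_path (hom_rel f) inr inl w w' -> B1 w') ->
  Px X (Some x) B1 = Px X' (Some (f x)) B2.
Proof.
move=> G1 G2 c12 c21; have [fc hobs hP] := hom.
have hE' := fd_hausdorff X'; have lcE' := fd_loc_compact X'.
have [e [e_open e_base]] := base_enum (fd_second_countable X').
set G0 := [set w | @Omega E w /\ @Omega E' (L w)].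
have GG0 : Gsig G0 by exact: (Gsig_G0 fc hE' lcE' e_open e_base).
have S2E : [set w | @Omega E w /\ B2 (L w)] = B1 `&` G0.
  apply/seteqP; split => w.
  - move=> [Ow B2w]; have OL := Gsig_sub G2 B2w.
    split => //; apply: (c21 (L w) w B2w Ow) => t _.
    by rewrite /lift_path /rel_pt; case: (w t).
  - move=> [B1w [Ow OL]]; split => //; apply: (c12 w (L w) B1w OL) => t _.
    by rewrite /lift_path /rel_pt; case: (w t).
rewrite (hP x B2 G2) S2E.
have hmu := Px_prob X (Some x).
set P := Px X (Some x) in hmu *.
have [mu0 mupos _ muO] := hmu.
have hG0 : P G0 = 1%E.
  by rewrite /P /G0 -(hP x _ (@Gsig_Omega E')); have [_ _ _ ->] := Px_prob X' (Some (f x)).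
have GnG0 : Gsig (@Omega E `\` G0) by exact: Gsig_D.
have hnG0 : P (@Omega E `\` G0) = 0%E.
  have : P (G0 `|` (@Omega E `\` G0)) = (P G0 + P (@Omega E `\` G0))%E.
    apply: (prob_add2 hmu (@Gsig0 E) GG0 GnG0).
    by apply/seteqP; split => w // [g [_ ng]].
  have -> : G0 `|` (@Omega E `\` G0) = @Omega E.
    apply/seteqP; split => w; first by case => [[]|[]].
    by move=> Ow; have [g|ng] := pselect (G0 w); [left|right].
  rewrite muO hG0 => /esym; apply: one_plus_eq; exact: mupos.
have h1 : P (B1 `&` (@Omega E `\` G0)) = 0%E.
  have G1n : Gsig (B1 `&` (@Omega E `\` G0)) by exact: Gsig_I.
  have G1n' : Gsig ((@Omega E `\` G0) `&` (@Omega E `\` B1)) by apply: Gsig_I => //; exact: Gsig_D.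
  have : P ((B1 `&` (@Omega E `\` G0)) `|` ((@Omega E `\` G0) `&` (@Omega E `\` B1))) =
      (P (B1 `&` (@Omega E `\` G0)) + P ((@Omega E `\` G0) `&` (@Omega E `\` B1)))%E.
    apply: (prob_add2 hmu (@Gsig0 E) G1n G1n').
    by apply/seteqP; split => w // [[b _] [_ [_ nb]]].
  have -> : (B1 `&` (@Omega E `\` G0)) `|` ((@Omega E `\` G0) `&` (@Omega E `\` B1)) = @Omega E `\` G0.
    apply/seteqP; split => w; first by case => [[]|[]].
    move=> [Ow ng]; have [b|nb] := pselect (B1 w); [left|right]; by split.
  rewrite hnG0 => /esym /eqP; rewrite padde_eq0 ?mupos // => /andP[/eqP -> _] //.
have : P ((B1 `&` G0) `|` (B1 `&` (@Omega E `\` G0))) =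
    (P (B1 `&` G0) + P (B1 `&` (@Omega E `\` G0)))%E.
  apply: (prob_add2 hmu (@Gsig0 E)); [exact: Gsig_I|exact: Gsig_I|].
  by apply/seteqP; split => w // [[_ g] [_ [_ ng]]].
have -> : (B1 `&` G0) `|` (B1 `&` (@Omega E `\` G0)) = B1.
  apply/seteqP; split => w; first by case => [[]|[]].
  move=> b; have [g|ng] := pselect (G0 w); [left|right] => //.
  by split => //; split => //; exact: (Gsig_sub G1).
by rewrite h1 adde0.
Qed.

End Core.

Theorem mainTheorem4 (E E' : topologicalType) (AP : finType)
    (X : FDProcess E AP) (X' : FDProcess E' AP) (f : E -> E') :
  FD_hom X X' f -> bisimulation X X' (hom_rel f).
Proof.
move=> hom; have [fc hobs hP] := hom.
rewrite /bisimulation /=; split.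
- split.
  + by case.
  + by move=> [x|y] [x'|y'] /=.
  + by move=> [x|y] [x'|y'] [x''|y''] /= h1 h2; rewrite ?h1 ?h2 // -?h1 // -h2.
- move=> [x|y] [x'|y'] /= hR; split.
  + by rewrite !hobs hR.
  + move=> B1 B2 G1 G2 c11 c12 c21 c22.
    by rewrite (core_hom hom x G1 G2 c12 c21) (core_hom hom x' G1 G2 c12 c21) hR.
  + by rewrite hobs hR.
  + move=> B1 B2 G1 G2 c11 c12 c21 c22.
    by rewrite (core_hom hom x G1 G2 c12 c21) hR.
  + by rewrite hobs hR.
  + move=> B1 B2 G1 G2 c11 c12 c21 c22.
    by rewrite (core_hom hom x' G1 G2 c12 c21) hR.
  + by rewrite hR.
  + by move=> B1 B2 _ _ _ _ _ _; rewrite hR.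
Qed.
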